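(* Let $X\in\mathbb{Z}^{d\times N}$ be a matrix of full rank $d$ in $B$-basic form, $X=(B\,|\,A)$ with $B\in\mathbb{Z}^{d\times d}$ a diagonal matrix of full rank with non-negative entries and $A\in\mathbb{Z}^{d\times(N-d)}$ (columns indexed by $d+1,\dots,N$). Then, up to sign, every non-zero subdeterminant of $A$ is determined by the arithmetic matroid $\mathcal{A}(X)$: precisely, if $X'=(B'\,|\,A')\in\mathbb{Z}^{d\times N}$ is also in $B$-basic form (with $B'$ diagonal of full rank with non-negative entries) and represents the same arithmetic matroid as $X$, then for all $I\subseteq[d]$ and $J\subseteq\{d+1,\dots,N\}$ with $|I|=|J|$ such that the submatrix $A_{I,J}$ of $A$ with rows $I$ and columns $J$ has $\det(A_{I,J})\neq 0$, we have $|\det(A_{I,J})|=|\det(A'_{I,J})|$.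
   Context: The arithmetic matroid $\mathcal{A}(X)$ represented by $X\in\mathbb{Z}^{d\times N}$ with columns $x_1,\dots,x_N$ is $([N],\operatorname{rk},m)$ where $\operatorname{rk}(S)$ is the dimension of the real span $\langle S\rangle_{\mathbb{R}}$ of $\{x_e:e\in S\}$ and $m(S)=|(\langle S\rangle_{\mathbb{R}}\cap\mathbb{Z}^d)/\langle S\rangle|$, with $\langle S\rangle$ the subgroup of $\mathbb{Z}^d$ generated by $\{x_e:e\in S\}$. *)

(* Defs.v *)
From HB Require Import structures.
From mathcomp Require Import all_boot all_order all_algebra.
Set Implicit Arguments. Unset Strict Implicit. Unset Printing Implicit Defensive.
Import Order.TTheory GRing.Theory Num.Theory.
Local Open Scope ring_scope.

(* Integer matrices X : 'M[int]_(d, N); columns indexed by 'I_N.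
   Real spans of integer vectors are computed over rat (same dimension,
   same integer points). *)

Definition ratmx (m n : nat) (M : 'M[int]_(m, n)) : 'M[rat]_(m, n) :=
  map_mx (fun z : int => z%:~R) M.

(* rk(S) = dimension of the span of the columns x_e, e in S
   (columns outside S replaced by 0). *)
Definition mat_rk (d N : nat) (X : 'M[int]_(d, N)) (S : {set 'I_N}) : nat :=
  \rank (ratmx X *m diag_mx (\row_(j < N) (if j \in S then 1 else 0 : rat))).

Definition in_span (d N : nat) (X : 'M[int]_(d, N)) (S : {set 'I_N})
  (x : 'cV[int]_d) : Prop :=
  exists c : 'cV[rat]_N, (forall j, j \notin S -> c j 0 = 0) /\
    ratmx x = ratmx X *m c.

Definition in_lattice (d N : nat) (X : 'M[int]_(d, N)) (S : {set 'I_N})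
  (x : 'cV[int]_d) : Prop :=
  exists c : 'cV[int]_N, (forall j, j \notin S -> c j 0 = 0) /\ x = X *m c.

(* is_mult X S m : the group (<S>_R ∩ Z^d) / <S> has exactly m elements,
   i.e. there are m representatives of pairwise distinct cosets covering all. *)
Definition is_mult (d N : nat) (X : 'M[int]_(d, N)) (S : {set 'I_N}) (m : nat)
  : Prop :=
  exists reps : 'I_m -> 'cV[int]_d,
    (forall i, in_span X S (reps i)) /\
    (forall i j, in_lattice X S (reps i - reps j) -> i = j) /\
    (forall x, in_span X S x -> exists i, in_lattice X S (x - reps i)).

Definition same_arith_matroid (d N : nat) (X X' : 'M[int]_(d, N)) : Prop :=
  forall S : {set 'I_N}, mat_rk X S = mat_rk X' S /\
    (forall m, is_mult X S m <-> is_mult X' S m).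

Definition basic_diag (d : nat) (B : 'M[int]_d) : Prop :=
  is_diag_mx B /\ (forall i, 0 <= B i i) /\ \rank (ratmx B) = d.

(* Main.v *)
Require Import Defs.
From HB Require Import structures.
From mathcomp Require Import all_boot all_order all_algebra all_fingroup.
From mathcomp Require Import zify ring lra.
From Stdlib Require Import ClassicalEpsilon.
Import Order.TTheory GRing.Theory Num.Theory.
Local Open Scope ring_scope.
Set Implicit Arguments. Unset Strict Implicit.

Definition ismult' (m : nat) (P Q : 'cV[int]_m -> Prop) (k : nat) : Prop :=
  exists reps : 'I_k -> 'cV[int]_m,
    (forall i, P (reps i)) /\
    (forall i j, Q (reps i - reps j) -> i = j) /\
    (forall x, P x -> exists i, Q (x - reps i)).

Lemma ismult_le m (P Q : 'cV[int]_m -> Prop) k1 k2 :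
  (forall x y, Q x -> Q y -> Q (x - y)) ->
  ismult' P Q k1 -> ismult' P Q k2 -> (k1 <= k2)%N.
Proof.
move=> QB [r1 [P1 [D1 C1]]] [r2 [P2 [D2 C2]]].
have H : forall i, {j | Q (r1 i - r2 j)}.
  move=> i; apply: constructive_indefinite_description; exact: C2.
pose phi i := sval (H i).
have inj : injective phi.
  move=> i i' e; apply: D1.
  have := QB _ _ (svalP (H i)) (svalP (H i')).
  rewrite /phi in e. rewrite e.
  by have -> : r1 i - r2 (sval (H i')) - (r1 i' - r2 (sval (H i'))) = r1 i - r1 i' by rewrite opprB addrA subrK.
by have := leq_card phi inj; rewrite !card_ord.
Qed.

Lemma ismult_uniq m (P Q : 'cV[int]_m -> Prop) k1 k2 :
  (forall x y, Q x -> Q y -> Q (x - y)) ->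
  ismult' P Q k1 -> ismult' P Q k2 -> k1 = k2.
Proof.
move=> QB h1 h2; apply/eqP; rewrite eqn_leq.
by rewrite (ismult_le QB h1 h2) (ismult_le QB h2 h1).
Qed.

Lemma ismult_ext m (P Q P' Q' : 'cV[int]_m -> Prop) k :
  (forall x, P x <-> P' x) -> (forall x, Q x <-> Q' x) ->
  ismult' P Q k -> ismult' P' Q' k.
Proof.
move=> eP eQ [r [h1 [h2 h3]]]; exists r; split; [|split].
- by move=> i; apply/eP.
- by move=> i j /eQ; apply: h2.
- by move=> x /eP /h3 [i /eQ]; exists i.
Qed.

Lemma ismult_transp m (P Q : 'cV[int]_m -> Prop) k (U : 'M[int]_m) :
  U \in unitmx -> ismult' P Q k ->
  ismult' (fun x => P (invmx U *m x)) (fun x => Q (invmx U *m x)) k.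
Proof.
move=> Uu [r [h1 [h2 h3]]]; exists (fun i => U *m r i); split; [|split].
- by move=> i; rewrite (mulKmx Uu).
- by move=> i j; rewrite -mulmxBr (mulKmx Uu) =>/h2.
- move=> x /h3 [i Hi]; exists i; by rewrite mulmxBr (mulKmx Uu).
Qed.
Lemma card_ltord K c : (c <= K)%N -> #|[pred a : 'I_K | (a < c)%N]| = c.
Proof.
move=> cK.
transitivity #|[set widen_ord cK i | i in 'I_c]|; last first.
  by rewrite card_imset ?card_ord //; move=> x y /(congr1 val) /= /val_inj.
apply: eq_card => a; rewrite inE /=; apply/idP/imsetP.
  by move=> ac; exists (Ordinal ac) => //; apply: val_inj.
by case=> i _ ->; rewrite /= ltn_ord.
Qed.

Lemma card_box m K (C : 'I_m -> nat) : (forall i, C i <= K)%N ->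
  #|[set phi : {ffun 'I_m -> 'I_K} | [forall i, (phi i < C i)%N]]| = (\prod_i C i)%N.
Proof.
move=> CK.
have -> : #|[set phi : {ffun 'I_m -> 'I_K} | [forall i, (phi i < C i)%N]]| =
   #|(family (fun i => [pred a : 'I_K | (a < C i)%N]) : simpl_pred {ffun 'I_m -> 'I_K})|.
  by apply: eq_card => phi; rewrite inE.
rewrite card_family foldrE big_map big_enum /=.
by apply: eq_bigr => i _; rewrite card_ltord.
Qed.

Lemma dvd_small (a b c : nat) : (a < c)%N -> (b < c)%N -> (c%:Z %| a%:Z - b%:Z)%Z -> a = b.
Proof. move=> h1 h2 /dvdzP [q e].
case: (ltrgtP q 0) => hq.
- have : q * c%:Z <= - c%:Z by rewrite -mulN1r ler_wpM2r //; lia.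
  lia.
- have : c%:Z <= q * c%:Z by rewrite -{1}(mul1r c%:Z) ler_wpM2r //; lia.
  lia.
- move: e; rewrite hq mul0r; lia.
Qed.

Lemma dvd_mod (x : int) (c : nat) : (0 < c)%N -> (c%:Z %| x - (absz (x %% c%:Z)%Z)%:Z)%Z.
Proof. move=> cp.
have -> : ((absz (x %% c%:Z)%Z)%:Z = (x %% c%:Z)%Z).
  have : (0 <= (x %% c%:Z)%Z) by rewrite modz_ge0 // eqz_nat -lt0n.
  lia.
by rewrite {1}(divz_eq x c) addrK; apply: dvdz_mull; apply: dvdzz.
Qed.

Lemma ismult_diag m (T : {set 'I_m}) (c : 'I_m -> nat) : (forall i, 0 < c i)%N ->
  ismult' (fun x : 'cV[int]_m => forall i, i \notin T -> x i 0 = 0)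
   (fun x => (forall i, i \notin T -> x i 0 = 0) /\
             (forall i, i \in T -> ((c i)%:Z %| (x i 0)%R)%Z))
   (\prod_(i in T) c i).
Proof.
move=> cpos.
pose C i := if i \in T then c i else 1%N.
have Cpos : forall i, (0 < C i)%N by move=> i; rewrite /C; case: ifP.
have CK : forall i, (C i <= \sum_j C j)%N.
  by move=> i; rewrite (bigD1 i) //= leq_addr.
pose R := [set phi : {ffun 'I_m -> 'I_(\sum_j C j).+1} | [forall i, (phi i < C i)%N]].
have cardR : #|R| = (\prod_(i in T) c i)%N.
  rewrite card_box; last by move=> i; exact: leqW.
  rewrite [RHS]big_mkcond /=; apply: eq_bigr => i _; by rewrite /C; case: ifP.
rewrite -cardR.
exists (fun j => \col_l (((enum_val (A := R) j) : {ffun _ -> _}) l : nat)%:Z); split; [|split].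
- move=> j i iT; rewrite mxE.
  have := enum_valP j; rewrite inE => /forallP /(_ i).
  by rewrite /C (negbTE iT) ltnS leqn0 => /eqP ->.
- move=> j j' [_ H]; apply: enum_val_inj; apply/ffunP => l; apply: val_inj.
  have := enum_valP j; have := enum_valP j'.
  rewrite !inE => /forallP /(_ l) h' /forallP /(_ l) h.
  move: (H l); rewrite !mxE /C in h h' *.
  case: (l \in T) in h h' * => [|_].
    by move=> /(_ isT); apply: dvd_small.
  move: h h'; rewrite /=; lia.
- move=> x Px.
  pose phi := [ffun l => inord (absz (((x l 0)%R) %% (C l)%:Z)%Z) : 'I_(\sum_j C j).+1].
  have phiv : forall l, (phi l : nat) = absz (((x l 0)%R) %% (C l)%:Z)%Z.
    move=> l; rewrite ffunE inordK //.
    have := CK l; have := Cpos l; lia.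
  have phiR : phi \in R.
    rewrite inE; apply/forallP => l; rewrite phiv; have := Cpos l; lia.
  exists (enum_rank_in phiR phi); rewrite enum_rankK_in //; split.
  + move=> i iT; rewrite !mxE phiv Px // /C (negbTE iT) modz1; lia.
  + move=> i iT; rewrite !mxE phiv /C iT; exact: dvd_mod.
Qed.

Lemma absz_unit (x : int) : x \is a GRing.unit -> absz x = 1%N.
Proof. by case/orP => /eqP ->. Qed.

Lemma ismult_full m (M : 'M[int]_m) : \det M != 0 ->
  ismult' (fun _ => True) (fun x => exists c, x = M *m c) `|\det M|%N.
Proof.
move=> dM.
case: (int_Smith_normal_form M) => L Lu [R Ru [s _ eM]].
set D := \matrix_(i, j) _ in eM.
have eD : D = diag_mx (\row_i s`_i).
  by apply/matrixP => i j; rewrite !mxE.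
have detM : `|\det M|%N = (\prod_(i < m) absz (s`_i)%R)%N.
  rewrite eM !det_mulmx !abszM.
  rewrite unitmxE in Lu; rewrite unitmxE in Ru.
  rewrite (absz_unit Lu) (absz_unit Ru) mul1n muln1 eD det_diag.
  rewrite (big_morph absz abszM (erefl _)); apply: eq_bigr => i _; by rewrite mxE.
have snz : forall i : 'I_m, s`_i != 0.
  move: dM; rewrite eM !det_mulmx eD det_diag => /negP H i; apply/negP => /eqP si.
  apply: H; rewrite (bigD1 i) //= mxE si mul0r mulr0 mul0r //.
have cpos : forall i : 'I_m, (0 < (absz (s`_i)%R))%N by move=> i; rewrite absz_gt0.
have := ismult_transp Lu (ismult_diag setT cpos).
have -> : (\prod_(i in [set: 'I_m]) absz (s`_i)%R = `|\det M|)%N.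
  by rewrite detM; apply: eq_bigl => i; rewrite inE.
apply: ismult_ext => x; first by split => // _ i; rewrite inE.
split.
- move=> [_ H].
  exists (invmx R *m \col_i (((invmx L *m x) i 0)%R %/ (s`_i)%R)%Z).
  rewrite eM -!mulmxA (mulKVmx Ru) eD mul_diag_mx.
  have -> : \matrix_(i, j) ((\row_i0 s`_i0) 0 i *
        (\col_i0 (((invmx L *m x) i0 0)%R %/ (s`_i0)%R)%Z) i j) = invmx L *m x.
    apply/matrixP => i j; rewrite !mxE (ord1 j) mulrC divzK //.
    by move: (H i (in_setT i)); rewrite !dvdzE !mxE.
  by rewrite (mulKVmx Lu).
- move=> [c ->]; split => [i|i _]; first by rewrite inE.
  rewrite eM -!mulmxA (mulKmx Lu) eD mul_diag_mx mxE !dvdzE /=.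
  rewrite mxE abszM; exact: dvdn_mulr.
Qed.
Section Conv.
Variable R : comPzRingType.

Definition extv (k N : nat) (h : 'I_k -> 'I_N) (c : 'cV[R]_k) : 'cV[R]_N :=
  \col_j \sum_i (h i == j)%:R * c i 0.

Lemma sum_sel (k N : nat) (h : 'I_k -> 'I_N) (F : 'I_N -> R) i :
  \sum_j F j * (h i == j)%:R = F (h i).
Proof.
rewrite (bigD1 (h i)) //= eqxx mulr1 big1 ?addr0 // => j /negbTE.
by rewrite eq_sym => ->; rewrite mulr0.
Qed.

Lemma mul_extv m k N (X : 'M[R]_(m, N)) (h : 'I_k -> 'I_N) c :
  X *m extv h c = colsub h X *m c.
Proof.
apply/matrixP => a b; rewrite (ord1 b) !mxE.
under eq_bigr => j _ do rewrite mxE big_distrr.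
rewrite exchange_big /=; apply: eq_bigr => i _; rewrite !mxE.
rewrite -(sum_sel h (fun j => X a j * c i 0)); apply: eq_bigr => j _; ring.
Qed.

Lemma extv_supp k N (h : 'I_k -> 'I_N) c j :
  j \notin [set h i | i in 'I_k] -> extv h c j 0 = 0.
Proof.
move=> nj; rewrite mxE big1 // => i _.
case: eqP => [e|]; last by rewrite mul0r.
by move: nj; rewrite -e imset_f.
Qed.

Lemma mul_restr m k N (X : 'M[R]_(m, N)) (h : 'I_k -> 'I_N) (c : 'cV[R]_N) :
  injective h -> (forall j, j \notin [set h i | i in 'I_k] -> c j 0 = 0) ->
  X *m c = colsub h X *m \col_i c (h i) 0.
Proof.
move=> hi cs; apply/matrixP => a b; rewrite (ord1 b) !mxE.
rewrite (bigID (mem [set h i | i in 'I_k])) /= [X in _ + X]big1 ?addr0; last first.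
  by move=> j /cs ->; rewrite mulr0.
rewrite big_imset /=; last by move=> x y _ _; apply: hi.
by apply: eq_bigr => i _; rewrite !mxE.
Qed.

End Conv.

Lemma ratmxM m n p (A : 'M[int]_(m, n)) (B : 'M[int]_(n, p)) :
  ratmx (A *m B) = ratmx A *m ratmx B.
Proof. by rewrite /ratmx map_mxM. Qed.

Lemma ratmx_colsub m k N (X : 'M[int]_(m, N)) (h : 'I_k -> 'I_N) :
  ratmx (colsub h X) = colsub h (ratmx X).
Proof. by apply/matrixP => i j; rewrite !mxE. Qed.

Lemma ratmx_inj m n : injective (@ratmx m n).
Proof.
move=> A B e; apply/matrixP => i j.
by have := congr1 (fun M : 'M[rat]_(m, n) => M i j) e; rewrite !mxE => /intr_inj.
Qed.

Lemma in_lattice_sub d N k (X : 'M[int]_(d, N)) (h : 'I_k -> 'I_N) x :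
  injective h ->
  in_lattice X [set h i | i in 'I_k] x <-> exists c, x = colsub h X *m c.
Proof.
move=> hi; split.
- by move=> [c [cs ->]]; exists (\col_i c (h i) 0); apply: mul_restr.
- move=> [c ->]; exists (extv h c); split; first exact: extv_supp.
  by rewrite mul_extv.
Qed.

Lemma in_span_sub d N k (X : 'M[int]_(d, N)) (h : 'I_k -> 'I_N) x :
  injective h ->
  in_span X [set h i | i in 'I_k] x <->
    exists c, ratmx x = colsub h (ratmx X) *m c.
Proof.
move=> hi; split.
- by move=> [c [cs e]]; exists (\col_i c (h i) 0); rewrite e; apply: mul_restr.
- move=> [c e]; exists (extv h c); split; first exact: extv_supp.
  by rewrite e mul_extv.
Qed.

Lemma mat_rk_sub d N k (X : 'M[int]_(d, N)) (h : 'I_k -> 'I_N) :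
  injective h ->
  mat_rk X [set h i | i in 'I_k] = \rank (colsub h (ratmx X)).
Proof.
move=> hi; rewrite /mat_rk.
set Y := _ *m _.
pose E : 'M[rat]_(k, N) := \matrix_(i, j) (h i == j)%:R.
have e1 : Y = colsub h (ratmx X) *m E.
  apply/matrixP => a j; rewrite /Y mul_mx_diag !mxE.
  case: ifP => [/imsetP [i _ ->]|nj].
    rewrite mulr1 (bigD1 i) //= !mxE eqxx mulr1 big1 ?addr0 // => i' ne.
    by rewrite !mxE (inj_eq hi) (negbTE ne) mulr0.
  rewrite mulr0 big1 // => i _; rewrite !mxE.
  case: eqP => [e|]; last by rewrite mulr0.
  by move: nj; rewrite -e imset_f.
have e2 : colsub h (ratmx X) = Y *m E^T.
  rewrite /Y mul_mx_diag; apply/matrixP => a i; rewrite !mxE.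
  rewrite (bigD1 (h i)) //= !mxE imset_f // eqxx !mulr1 big1 ?addr0 // => j ne.
  by rewrite !mxE eq_sym (negbTE ne) mulr0.
apply/eqP; rewrite eqn_leq; apply/andP; split.
  by rewrite e1 mxrankM_maxl.
by rewrite e2 mxrankM_maxl.
Qed.

Lemma diag_entry (R : comPzRingType) m r (B : 'M[R]_m) (t : 'I_r -> 'I_m) (c : 'cV[R]_r) :
  is_diag_mx B -> injective t ->
  (forall b, (colsub t B *m c) (t b) 0 = B (t b) (t b) * c b 0) /\
  (forall i, i \notin [set t b | b in 'I_r] -> (colsub t B *m c) i 0 = 0).
Proof.
move=> /is_diag_mxP dB ti; split.
- move=> b; rewrite !mxE (bigD1 b) //= !mxE big1 ?addr0 // => b' ne.
  by rewrite !mxE dB ?mul0r // (inj_eq val_inj) (inj_eq ti) eq_sym.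
- move=> i ni; rewrite !mxE big1 // => b _; rewrite !mxE dB ?mul0r //.
  rewrite (inj_eq val_inj); apply: contraNneq ni => ->; exact: imset_f.
Qed.

Lemma key_diag k r n (B : 'M[int]_k) (A : 'M[int]_(k, n)) (t : 'I_r -> 'I_k) :
  is_diag_mx B -> (forall i, B i i != 0) -> injective t ->
  is_mult (row_mx B A) [set lshift n (t b) | b in 'I_r]
    (\prod_(i in [set t b | b in 'I_r]) absz (B i i)).
Proof.
move=> dB nzB ti.
have hi : injective (fun b => lshift n (t b)).
  by move=> x y /(congr1 val) /= /val_inj /ti.
have eC : colsub (fun b => lshift n (t b)) (row_mx B A) = colsub t B.
  by apply/matrixP => i j; rewrite [LHS]mxE row_mxEl mxE.
have dBr : is_diag_mx (ratmx B).
  by have /is_diag_mxP dB0 := dB; apply/is_diag_mxP => i j ne; rewrite mxE dB0.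
have cpos : forall i, (0 < absz (B i i))%N by move=> i; rewrite absz_gt0.
apply: (ismult_ext _ _ (ismult_diag [set t b | b in 'I_r] cpos)) => x.
- rewrite (in_span_sub _ _ hi) -ratmx_colsub eC ratmx_colsub; split.
  + move=> Px.
    exists (\col_b ((x (t b) 0)%:~R / (B (t b) (t b))%:~R)).
    apply/matrixP => i j; rewrite (ord1 j).
    have [e1 e2] := diag_entry (\col_b ((x (t b) 0)%:~R / (B (t b) (t b))%:~R)) dBr ti.
    case: (boolP (i \in [set t b | b in 'I_r])) => [/imsetP [b _ ->]|ni].
      rewrite e1 !mxE mulrC divfK // intr_eq0; exact: nzB.
    by rewrite e2 // mxE Px.
  + move=> [c e] i ni.
    have [_ e2] := diag_entry c dBr ti.
    have := congr1 (fun M : 'cV[rat]_k => M i 0) e; rewrite /= e2 // mxE.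
    by move/eqP; rewrite intr_eq0 => /eqP.
- rewrite (in_lattice_sub _ _ hi) eC; split.
  + move=> [Px H].
    exists (\col_b ((x (t b) 0)%R %/ B (t b) (t b))%Z).
    apply/matrixP => i j; rewrite (ord1 j).
    have [e1 e2] := diag_entry (\col_b ((x (t b) 0)%R %/ B (t b) (t b))%Z) dB ti.
    case: (boolP (i \in [set t b | b in 'I_r])) => [/imsetP [b _ ->]|ni].
      rewrite e1 !mxE mulrC divzK //.
      have tb : t b \in [set t b | b in 'I_r] by apply: imset_f.
      by move: (H (t b) tb); rewrite !dvdzE.
    by rewrite e2 // Px.
  + move=> [c ->]; have [e1 e2] := diag_entry c dB ti; split.
      by move=> i ni; rewrite e2.
    move=> i /imsetP [b _ ->]; rewrite e1 !dvdzE abszM /=; exact: dvdn_mulr.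
Qed.

Lemma split_l m1 m2 (a : 'I_m1) : split (lshift m2 a) = inl a.
Proof. exact: (unsplitK (inl a)). Qed.
Lemma split_r m1 m2 (a : 'I_m2) : split (rshift m1 a) = inr a.
Proof. exact: (unsplitK (inr a)). Qed.

Definition hcol k r n (g : 'I_k -> 'I_n) (t : 'I_r -> 'I_(k + r)) :
  'I_(k + r) -> 'I_(k + r + n) :=
  fun a => match split a with inl a1 => rshift (k + r) (g a1)
                            | inr b => lshift n (t b) end.

Definition sig k r m (f : 'I_k -> 'I_m) (t : 'I_r -> 'I_m) : 'I_(k + r) -> 'I_m :=
  fun a => match split a with inl a1 => f a1 | inr b => t b end.

Lemma sig_inj k r m (f : 'I_k -> 'I_m) (t : 'I_r -> 'I_m) :
  injective f -> injective t -> (forall a b, f a != t b) -> injective (sig f t).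
Proof.
move=> fi ti ne x y; rewrite -(splitK x) -(splitK y) /sig !unsplitK.
case: (split x) => a; case: (split y) => b /= e.
- by rewrite (fi _ _ e).
- by move: (ne a b); rewrite e eqxx.
- by move: (ne b a); rewrite e eqxx.
- by rewrite (ti _ _ e).
Qed.

Lemma hcol_inj k r n (g : 'I_k -> 'I_n) (t : 'I_r -> 'I_(k + r)) :
  injective g -> injective t -> injective (hcol g t).
Proof.
move=> gi ti x y; rewrite -(splitK x) -(splitK y) /hcol !unsplitK.
case: (split x) => a; case: (split y) => b /= e.
- by move: e => /(congr1 val) /= /eqP; rewrite eqn_add2l => /eqP /val_inj /gi ->.
- by move: (eq_lrshift (t b) (g a)); rewrite e eqxx.
- by move: (eq_lrshift (t a) (g b)); rewrite e eqxx.
- by move: e => /(congr1 val) /= /val_inj /ti ->.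
Qed.

Lemma key_block k r n (B : 'M[int]_(k + r)) (A : 'M[int]_(k + r, n))
  (f : 'I_k -> 'I_(k + r)) (g : 'I_k -> 'I_n) (t : 'I_r -> 'I_(k + r)) :
  is_diag_mx B -> injective f -> injective t -> (forall a b, f a != t b) ->
  absz (\det (colsub (hcol g t) (row_mx B A))) =
    (absz (\det (mxsub f g A)) * \prod_b absz (B (t b) (t b)))%N.
Proof.
move=> /is_diag_mxP dB fi ti ne.
have si := sig_inj fi ti ne.
set M := colsub _ _.
have eB : rowsub (sig f t) M =
    block_mx (mxsub f g A) 0 (mxsub t g A) (diag_mx (\row_b B (t b) (t b))).
  apply/matrixP => i j; rewrite -(splitK i) -(splitK j).
  case: (split i) => a; case: (split j) => b;
    rewrite /= ?block_mxEul ?block_mxEur ?block_mxEdl ?block_mxEdr !mxE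
       /sig /hcol ?split_l ?split_r ?row_mxEl ?row_mxEr ?mxE ?split_l ?split_r //.
  + by rewrite dB //; exact: ne.
  + case: (eqVneq a b) => [->|nab]; first by rewrite mulr1n.
    by rewrite mulr0n dB // (inj_eq val_inj) (inj_eq ti).
have eP : rowsub (sig f t) M = row_perm (perm si) M.
  by apply/matrixP => i j; rewrite !mxE permE.
have := congr1 (fun X => absz (\det X)) eB.
rewrite /= eP row_permE det_mulmx det_perm abszMsign => ->.
rewrite det_lblock abszM det_diag (big_morph absz abszM (erefl _)).
by congr (_ * _)%N; apply: eq_bigr => b _; rewrite mxE.
Qed.

Lemma homo_inj k m (f : 'I_k -> 'I_m) :
  {homo f : x y / (x < y)%N >-> (x < y)%N} -> injective f.
Proof.
move=> hf x y e; apply/val_inj/eqP; case: ltngtP => // h.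
- by have := hf _ _ h; rewrite e ltnn.
- by have := hf _ _ h; rewrite e ltnn.
Qed.

Lemma diag_nz d (B : 'M[int]_d) : basic_diag B -> forall i, B i i != 0.
Proof.
move=> [dB [_ rB]] i.
have u : ratmx B \in unitmx by rewrite -row_free_unit /row_free rB.
move: u; rewrite unitmxE unitfE /ratmx det_map_mx intr_eq0.
have /is_diag_mxP dB0 := dB.
have -> : B = diag_mx (\row_j B j j).
  apply/matrixP => a b; rewrite !mxE; case: (eqVneq a b) => [->|nab].
    by rewrite mulr1n.
  by rewrite mulr0n dB0.
rewrite det_diag => /prodf_neq0 /(_ i isT); by rewrite !mxE eqxx mulr1n.
Qed.

Lemma lattice_sub d N (X : 'M[int]_(d, N)) S x y :
  in_lattice X S x -> in_lattice X S y -> in_lattice X S (x - y).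
Proof.
move=> [c [cs ->]] [c' [cs' ->]]; exists (c - c'); split.
  by move=> j nj; rewrite !mxE cs // cs' // subr0.
by rewrite mulmxBr.
Qed.

Lemma full_mult d N (X : 'M[int]_(d, N)) (h : 'I_d -> 'I_N) :
  injective h -> \det (colsub h X) != 0 ->
  is_mult X [set h i | i in 'I_d] `|\det (colsub h X)|%N.
Proof.
move=> hi dM.
apply: (ismult_ext _ _ (ismult_full dM)) => x.
- rewrite (in_span_sub _ _ hi); split => // _.
  have u : ratmx (colsub h X) \in unitmx.
    by rewrite unitmxE unitfE /ratmx det_map_mx intr_eq0.
  exists (invmx (ratmx (colsub h X)) *m ratmx x).
  by rewrite -ratmx_colsub (mulKVmx u).
- by rewrite (in_lattice_sub _ _ hi).
Qed.

Unset Implicit Arguments.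

Theorem lemma3p4 (d n : nat) (B B' : 'M[int]_d) (A A' : 'M[int]_(d, n)) :
  basic_diag B -> basic_diag B' ->
  \rank (ratmx (row_mx B A)) = d ->
  \rank (ratmx (row_mx B' A')) = d ->
  same_arith_matroid (row_mx B A) (row_mx B' A') ->
  forall (k : nat) (f : 'I_k -> 'I_d) (g : 'I_k -> 'I_n),
    {homo f : x y / (x < y)%N >-> (x < y)%N} ->
    {homo g : x y / (x < y)%N >-> (x < y)%N} ->
    \det (mxsub f g A) != 0 ->
    `|\det (mxsub f g A)| = `|\det (mxsub f g A')|.
Proof.
move=> bB bB' _ _ hM k f g hf hg hdet.
have nzB := diag_nz bB; have nzB' := diag_nz bB'.
have dB := bB.1; have dB' := bB'.1.
have fi := homo_inj hf; have gi := homo_inj hg.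
have kd : (k <= d)%N by have := leq_card f fi; rewrite !card_ord.
have [r er] : exists r, d = (k + r)%N by exists (d - k)%N; rewrite subnKC.
subst d.
set T0 := ~: [set f a | a in 'I_k].
have cT0 : #|T0| = r.
  apply/eqP; rewrite -(eqn_add2l k); apply/eqP.
  have := cardsC [set f a | a in 'I_k]; rewrite card_imset // !card_ord => ->.
  by [].
pose t := fun b : 'I_r => enum_val (A := T0) (cast_ord (esym cT0) b).
have ti : injective t.
  by move=> x y /enum_val_inj /cast_ord_inj.
have ne : forall a b, f a != t b.
  move=> a b; have := enum_valP (A := T0) (cast_ord (esym cT0) b).
  rewrite /t inE; apply: contraNneq => <-; exact: imset_f.
have m1 := key_diag A dB nzB ti.
have m1' := key_diag A' dB' nzB' ti.
have m1x' := (proj2 (hM _) _).1 m1.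
have e1 := ismult_uniq (@lattice_sub _ _ _ _) m1x' m1'.
rewrite !big_imset /= in e1; try by move=> x y _ _; apply: ti.
have hi := hcol_inj gi ti.
have kb := key_block A g dB fi ti ne.
have kb' := key_block A' g dB' fi ti ne.
have Ppos : (0 < \prod_b absz (B (t b) (t b)))%N.
  by apply: prodn_gt0 => b; rewrite absz_gt0.
have dM : \det (colsub (hcol g t) (row_mx B A)) != 0.
  by rewrite -absz_eq0 kb muln_eq0 negb_or absz_eq0 hdet -lt0n Ppos.
have dM' : \det (colsub (hcol g t) (row_mx B' A')) != 0.
  have := (hM [set hcol g t a | a in 'I_(k + r)]).1.
  rewrite !mat_rk_sub // -!ratmx_colsub.
  rewrite mxrank_unit; last first.
    by rewrite unitmxE unitfE /ratmx det_map_mx intr_eq0.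
  move=> e; have u : ratmx (colsub (hcol g t) (row_mx B' A')) \in unitmx by rewrite -row_free_unit /row_free -e.
  by move: u; rewrite unitmxE unitfE /ratmx det_map_mx intr_eq0.
have m2 := full_mult hi dM.
have m2' := full_mult hi dM'.
have m2x' := (proj2 (hM _) _).1 m2.
have e2 := ismult_uniq (@lattice_sub _ _ _ _) m2x' m2'.
move: e2; rewrite kb kb' -e1 => /eqP; rewrite eqn_pmul2r // => /eqP e2.
by rewrite -!abszE e2.
Qed.
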